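(* Let $A$ be a T-brace and let $a\in\zeta_2(\star,A)$. If $a$ has finite order in $(A,+)$ and the additive group of $\zeta_2(\star,A)$ is not periodic, then $x\star a\in\langle a\star a\rangle$ and $a\star x\in\langle a\star a\rangle$ for all $x\in A$, where $\langle a\star a\rangle$ denotes the cyclic subgroup of $(A,+)$ generated by $a\star a$.
   Context: A (left) brace is a set $A$ with two operations $+$ and $\cdot$ such that $(A,+)$ is an abelian group, $(A,\cdot)$ is a group, and $a(b+c)=ab+ac-a$ for all $a,b,c\in A$. Put $a\star b=ab-a-b$. A subbrace is a subset which is a subgroup of both $(A,+)$ and $(A,\cdot)$; a subbrace $L$ is an ideal if $a\star z, z\star a\in L$ for all $a\in A$, $z\in L$, and then the quotient brace $A/L$ is defined. $A$ is a T-brace if whenever $I$ is an ideal of $J$ and $J$ is an ideal of $A$, then $I$ is an ideal of $A$. The $\star$-center is $\zeta(\star,A)=\{a: a\star x=x\star a=0\ \forall x\}$; $\zeta_2(\star,A)$ is given by $\zeta_2(\star,A)/\zeta(\star,A)=\zeta(\star,A/\zeta(\star,A))$. *)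

(* Defs.v *)
From HB Require Import structures.
From mathcomp Require Import all_boot all_algebra.
Set Implicit Arguments. Unset Strict Implicit. Unset Printing Implicit Defensive.
Import GRing.Theory.
Local Open Scope ring_scope.

Record brace_on (V : zmodType) := BraceOn {
  bmul : V -> V -> V;
  bone : V;
  binv : V -> V;
  bmulA : forall a b c, bmul a (bmul b c) = bmul (bmul a b) c;
  bmul1l : forall a, bmul bone a = a;
  bmul1r : forall a, bmul a bone = a;
  bmulVl : forall a, bmul (binv a) a = bone;
  bmulVr : forall a, bmul a (binv a) = bone;
  bdistr : forall a b c, bmul a (b + c) = bmul a b + bmul a c - a
}.

Section BraceDefs.
Variables (V : zmodType) (B : brace_on V).

Definition bstar (a b : V) : V := bmul B a b - a - b.

Definition subbrace (S : V -> Prop) : Prop :=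
  [/\ S 0, (forall x y, S x -> S y -> S (x + y)) & (forall x, S x -> S (- x))] /\
  [/\ S (bone B), (forall x y, S x -> S y -> S (bmul B x y))
    & (forall x, S x -> S (binv B x))].

Definition ideal_in (J I : V -> Prop) : Prop :=
  [/\ subbrace I, (forall z, I z -> J z)
    & (forall a z, J a -> I z -> I (bstar a z) /\ I (bstar z a))].

Definition ideal (I : V -> Prop) : Prop := ideal_in (fun _ => True) I.

Definition T_brace : Prop :=
  forall I J : V -> Prop, ideal J -> ideal_in J I -> ideal I.

Definition zeta (a : V) : Prop := forall x, bstar a x = 0 /\ bstar x a = 0.

(* second star-center: a + zeta lies in the star-center of A/zeta, i.e.
   (a * x) + zeta = 0 + zeta and (x * a) + zeta = 0 + zeta for all x *)
Definition zeta2 (a : V) : Prop :=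
  forall x, zeta (bstar a x) /\ zeta (bstar x a).

End BraceDefs.

(* Main.v *)
Require Import Defs.
From HB Require Import structures.
From mathcomp Require Import all_boot all_algebra.
Import GRing.Theory.
Local Open Scope ring_scope.
Set Implicit Arguments. Unset Strict Implicit.
From Stdlib Require Import Classical.
Lemma bmul0r {V : zmodType} (B : brace_on V) a : bmul B a 0 = a.
Proof. have := bdistr B a 0 0; rewrite addr0 => h.
have : bmul B a 0 + 0 = bmul B a 0 + (bmul B a 0 - a) by rewrite addr0 addrA -h.
by move/addrI/eqP; rewrite eq_sym subr_eq0 => /eqP. Qed.

Lemma bone0 {V : zmodType} (B : brace_on V) : bone B = 0.
Proof. by rewrite -(bmul0r B (bone B)) bmul1l. Qed.

Lemma bmul0l {V : zmodType} (B : brace_on V) a : bmul B 0 a = a.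
Proof. by rewrite -(bone0 B) bmul1l. Qed.

Lemma bmulE {V : zmodType} (B : brace_on V) a b : bmul B a b = a + b + bstar B a b.
Proof. rewrite /bstar -[bmul B a b - a - b]addrA -opprD. by rewrite [RHS]addrC subrK. Qed.

Lemma bstar0l {V : zmodType} (B : brace_on V) x : bstar B 0 x = 0.
Proof. by rewrite /bstar bmul0l subr0 subrr. Qed.

Lemma bstar0r {V : zmodType} (B : brace_on V) x : bstar B x 0 = 0.
Proof. by rewrite /bstar bmul0r subr0 subrr. Qed.

Lemma bstarDr {V : zmodType} (B : brace_on V) a x y :
  bstar B a (x + y) = bstar B a x + bstar B a y.
Proof. rewrite /bstar bdistr.
set p := bmul B a x; set q := bmul B a y.
rewrite opprD !addrA; congr (_ + _).
by rewrite [p - a - x + q]addrAC [p - a + q]addrAC [LHS]addrAC.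
Qed.

Lemma bstarNr {V : zmodType} (B : brace_on V) a x :
  bstar B a (- x) = - bstar B a x.
Proof. by apply/eqP; rewrite -addr_eq0 -bstarDr addNr bstar0r. Qed.

Lemma bstarMnr {V : zmodType} (B : brace_on V) a x (k : nat) :
  bstar B a (x *+ k) = bstar B a x *+ k.
Proof. elim: k => [|k IH]; first by rewrite !mulr0n bstar0r.
by rewrite !mulrS bstarDr IH. Qed.

Lemma bstarMzr {V : zmodType} (B : brace_on V) a x (k : int) :
  bstar B a (x *~ k) = bstar B a x *~ k.
Proof. case: k => k; first by rewrite -!pmulrn bstarMnr.
by rewrite !NegzE !mulrNz bstarNr -!pmulrn bstarMnr. Qed.

Lemma bstarM {V : zmodType} (B : brace_on V) x y z :
  bstar B (bmul B x y) z = bstar B x (bstar B y z) + bstar B x z + bstar B y z.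
Proof.
rewrite {1}/bstar -bmulA (bmulE B y z) (bdistr B x (y + z)) (bdistr B x y z).
rewrite [bstar B x _]/bstar [bstar B x z]/bstar.
set w := bstar B y z.
set P := bmul B x y; set Q := bmul B x z; set R := bmul B x w.
clearbody w P Q R.
rewrite [RHS]addrAC subrK !addrA; congr (_ + _).
rewrite [LHS]addrAC -(addrA P Q) -(addrA P) -(addrA P).
rewrite [P + _]addrC subrK; congr (_ + _).
by rewrite addrC addrA addrAC.
Qed.

Lemma zeta0 {V : zmodType} (B : brace_on V) : zeta B 0.
Proof. by move=> x; rewrite bstar0l bstar0r. Qed.

Lemma binv_eq {V : zmodType} (B : brace_on V) u :
  u + binv B u + bstar B u (binv B u) = 0.
Proof. by rewrite -bmulE bmulVr bone0. Qed.

Lemma zetaN {V : zmodType} (B : brace_on V) z : zeta B z -> zeta B (- z).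
Proof.
move=> hz x; split; last by rewrite bstarNr (proj2 (hz x)) oppr0.
have e := binv_eq B z; rewrite (proj1 (hz _)) addr0 in e.
have -> : - z = binv B z by apply/eqP; rewrite eq_sym -addr_eq0 addrC e.
have := bstarM B (binv B z) z x.
by rewrite bmulVl bone0 bstar0l (proj1 (hz x)) bstar0r add0r addr0 => <-.
Qed.

Lemma shiftZ {V : zmodType} (B : brace_on V) w z x :
  zeta B z -> bstar B (w + z) x = bstar B w x.
Proof.
move=> hz.
have -> : w + z = bmul B w z by rewrite bmulE (proj2 (hz w)) addr0.
by rewrite bstarM (proj1 (hz x)) bstar0r add0r addr0.
Qed.

Definition LZ {V : zmodType} (B : brace_on V) u := forall x, zeta B (bstar B u x).

Lemma starDl {V : zmodType} (B : brace_on V) u v x :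
  LZ B u -> LZ B v -> bstar B (u + v) x = bstar B u x + bstar B v x.
Proof.
move=> hu hv.
pose c := bmul B (binv B u) (u + v).
have e1 : bmul B u c = u + v by rewrite /c bmulA bmulVr bmul1l.
have e2 : c = v - bstar B u c.
  by apply: (canRL (addrK (bstar B u c))); apply: (addrI u); rewrite addrA -bmulE e1.
rewrite -e1 bstarM e2 [bstar B (v - _) x]shiftZ; last by apply: zetaN.
by rewrite (proj2 (hv x _)) add0r addrC.
Qed.

Lemma starNl {V : zmodType} (B : brace_on V) u x :
  LZ B u -> bstar B (- u) x = - bstar B u x.
Proof.
move=> hu.
have e : - u = binv B u + bstar B u (binv B u).
  by apply/eqP; rewrite eq_sym -addr_eq0 addrC addrA binv_eq.
rewrite e shiftZ //.
have := bstarM B (binv B u) u x.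
rewrite bmulVl bone0 bstar0l (proj2 (hu x _)) add0r => /eqP.
by rewrite eq_sym addr_eq0 => /eqP.
Qed.

Lemma zetaD {V : zmodType} (B : brace_on V) z1 z2 :
  zeta B z1 -> zeta B z2 -> zeta B (z1 + z2).
Proof.
move=> h1 h2.
have l1 : LZ B z1 by move=> x; rewrite (proj1 (h1 x)); apply: zeta0.
have l2 : LZ B z2 by move=> x; rewrite (proj1 (h2 x)); apply: zeta0.
move=> x; rewrite starDl // bstarDr (proj1 (h1 x)) (proj1 (h2 x)).
by rewrite (proj2 (h1 x)) (proj2 (h2 x)) addr0.
Qed.

Lemma closedMz {V : zmodType} (P : V -> Prop) :
  P 0 -> (forall x y, P x -> P y -> P (x + y)) -> (forall x, P x -> P (- x)) ->
  forall u k, P u -> P (u *~ k).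
Proof.
move=> h0 hD hN u k hu.
have hn : forall n : nat, P (u *+ n).
  by elim=> [|n IH]; [rewrite mulr0n | rewrite mulrS; apply: hD].
case: k => n; first by rewrite -pmulrn.
by rewrite NegzE mulrNz -pmulrn; apply: hN.
Qed.

Lemma zetaMz {V : zmodType} (B : brace_on V) z k : zeta B z -> zeta B (z *~ k).
Proof. apply: closedMz; [exact: zeta0 | exact: zetaD | exact: zetaN]. Qed.

Lemma LZ0 {V : zmodType} (B : brace_on V) : LZ B 0.
Proof. by move=> x; rewrite bstar0l; apply: zeta0. Qed.

Lemma LZD {V : zmodType} (B : brace_on V) u v : LZ B u -> LZ B v -> LZ B (u + v).
Proof. by move=> hu hv x; rewrite starDl //; apply: zetaD. Qed.

Lemma LZN {V : zmodType} (B : brace_on V) u : LZ B u -> LZ B (- u).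
Proof. by move=> hu x; rewrite starNl //; apply: zetaN. Qed.

Lemma LZMz {V : zmodType} (B : brace_on V) u k : LZ B u -> LZ B (u *~ k).
Proof. apply: closedMz; [exact: LZ0 | exact: LZD | exact: LZN]. Qed.

Lemma starMzl {V : zmodType} (B : brace_on V) u k x :
  LZ B u -> bstar B (u *~ k) x = bstar B u x *~ k.
Proof.
move=> hu.
have hn : forall n : nat, bstar B (u *+ n) x = bstar B u x *+ n.
  elim=> [|n IH]; first by rewrite !mulr0n bstar0l.
  rewrite !mulrS starDl ?IH //.
  by have := LZMz n hu; rewrite -pmulrn.
case: k => n; first by rewrite -!pmulrn.
rewrite !NegzE !mulrNz -!pmulrn starNl ?hn //.
by have := LZMz n.+1 hu; rewrite -pmulrn.
Qed.

Lemma zetaLZ {V : zmodType} (B : brace_on V) z : zeta B z -> LZ B z.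
Proof. by move=> h x; rewrite (proj1 (h x)); apply: zeta0. Qed.

Lemma zeta2LZ {V : zmodType} (B : brace_on V) u : zeta2 B u -> LZ B u.
Proof. by move=> h x; apply: (proj1 (h x)). Qed.

Lemma zeta2D {V : zmodType} (B : brace_on V) u v :
  zeta2 B u -> zeta2 B v -> zeta2 B (u + v).
Proof.
move=> hu hv x; split; first by rewrite starDl; [apply: zetaD| exact: zeta2LZ|exact: zeta2LZ]; [apply: (proj1 (hu x)) | apply: (proj1 (hv x))].
by rewrite bstarDr; apply: zetaD; [apply: (proj2 (hu x)) | apply: (proj2 (hv x))].
Qed.

Lemma zeta2N {V : zmodType} (B : brace_on V) u : zeta2 B u -> zeta2 B (- u).
Proof.
move=> hu x; split; first by rewrite starNl; [apply: zetaN| exact: zeta2LZ]; apply: (proj1 (hu x)).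
by rewrite bstarNr; apply: zetaN; apply: (proj2 (hu x)).
Qed.

Lemma zeta2_0 {V : zmodType} (B : brace_on V) : zeta2 B 0.
Proof. by move=> x; rewrite bstar0l bstar0r; split; apply: zeta0. Qed.

Lemma zeta2Mz {V : zmodType} (B : brace_on V) u k : zeta2 B u -> zeta2 B (u *~ k).
Proof. apply: closedMz; [exact: zeta2_0 | exact: zeta2D | exact: zeta2N]. Qed.

Lemma zeta_zeta2 {V : zmodType} (B : brace_on V) z : zeta B z -> zeta2 B z.
Proof. by move=> h x; rewrite (proj1 (h x)) (proj2 (h x)); split; apply: zeta0. Qed.

Lemma binvE {V : zmodType} (B : brace_on V) u :
  LZ B u -> binv B u = - u + bstar B u u.
Proof.
move=> hu.
have e := binv_eq B u.
have e2 : binv B u = - u - bstar B u (binv B u).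
  apply: (canRL (addrK (bstar B u (binv B u)))); apply: (addrI u).
  by rewrite addrA e subrr.
have e3 : bstar B u (binv B u) = - bstar B u u.
  by rewrite {1}e2 bstarDr bstarNr bstarNr (proj2 (hu _ u)) oppr0 addr0.
by rewrite {1}e2 e3 opprK.
Qed.


Lemma subbrace_of {V : zmodType} (B : brace_on V) (P : V -> Prop) :
  P 0 -> (forall x y, P x -> P y -> P (x + y)) -> (forall x, P x -> P (- x)) ->
  (forall x, P x -> LZ B x) -> (forall x y, P x -> P y -> P (bstar B x y)) ->
  subbrace B P.
Proof.
move=> h0 hD hN hL hS; split; split => //; first by rewrite bone0.
  by move=> x y hx hy; rewrite bmulE; apply: (hD); [apply: (hD)|apply: (hS)].
by move=> x hx; rewrite binvE; last exact: hL; apply: (hD); [apply: (hN)|apply: (hS)].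
Qed.

Definition lin3 {V : zmodType} (x y z : V) (m j l : int) := x *~ m + y *~ j + z *~ l.

Lemma lin3D {V : zmodType} (x y z : V) m j l m' j' l' :
  lin3 x y z m j l + lin3 x y z m' j' l' = lin3 x y z (m + m') (j + j') (l + l').
Proof. by rewrite /lin3 addrACA [_ + (x *~ m' + _)]addrACA !mulrzDr. Qed.

Lemma lin3N {V : zmodType} (x y z : V) m j l :
  - lin3 x y z m j l = lin3 x y z (- m) (- j) (- l).
Proof. by rewrite /lin3 !opprD !mulrNz. Qed.

Lemma lin3_0 {V : zmodType} (x y z : V) : lin3 x y z 0 0 0 = 0.
Proof. by rewrite /lin3 !mulr0z !addr0. Qed.

Lemma gen_ideal {V : zmodType} (B : brace_on V) a d :
  T_brace B -> zeta2 B a -> zeta2 B d -> bstar B a d = 0 -> bstar B d a = 0 ->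
  forall x,
  (exists m j l, bstar B x (a + d) = lin3 (a + d) (bstar B a a) (bstar B d d) m j l) /\
  (exists m j l, bstar B (a + d) x = lin3 (a + d) (bstar B a a) (bstar B d d) m j l).
Proof.
move=> TB ha hd had hda.
set s := a + d; set t := bstar B a a; set w := bstar B d d.
have zt : zeta B t by apply: (proj1 (ha a)).
have zw : zeta B w by apply: (proj1 (hd d)).
pose Jp v := exists p q z, zeta B z /\ v = a *~ p + d *~ q + z.
pose Ip u := exists m j l, u = lin3 s t w m j l.
have LZa := zeta2LZ ha; have LZd := zeta2LZ hd.
have Jz2 : forall v, Jp v -> zeta2 B v.
  move=> v [p [q [z [hz ->]]]].
  by apply: zeta2D; [apply: zeta2D; apply: zeta2Mz | apply: zeta_zeta2].
have IJ : forall u, Ip u -> Jp u.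
  move=> u [m [j [l ->]]]; exists m, m, (t *~ j + w *~ l); split.
    by apply: zetaD; apply: zetaMz.
  by rewrite /lin3 -addrA mulrzDl.
have Cva : forall p q z, zeta B z -> bstar B (a *~ p + d *~ q + z) a = t *~ p.
  move=> p q z hz; rewrite shiftZ // starDl ?starMzl // ?hda ?mul0rz ?addr0 //;
  exact: LZMz.
have Cvd : forall p q z, zeta B z -> bstar B (a *~ p + d *~ q + z) d = w *~ q.
  move=> p q z hz; rewrite shiftZ // starDl ?starMzl // ?had ?mul0rz ?add0r //;
  exact: LZMz.
have Cav : forall p q z, zeta B z -> bstar B a (a *~ p + d *~ q + z) = t *~ p.
  move=> p q z hz; rewrite !bstarDr !bstarMzr had mul0rz (proj2 (hz a)) !addr0 //.
have Cdv : forall p q z, zeta B z -> bstar B d (a *~ p + d *~ q + z) = w *~ q.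
  move=> p q z hz; rewrite !bstarDr !bstarMzr hda mul0rz (proj2 (hz d)) add0r addr0 //.
have star_JI : forall v u, Jp v -> Ip u -> Ip (bstar B v u) /\ Ip (bstar B u v).
  move=> v u [p [q [z [hz ->]]]] [m [j [l ->]]]; split.
    exists 0, (p * m), (q * m).
    rewrite /lin3 !bstarDr !bstarMzr (proj2 (zt _)) (proj2 (zw _)) !mul0rz !addr0.
    rewrite /s bstarDr Cva // Cvd // mulrzDl !mulrzA mulr0z add0r //.
  exists 0, (p * m), (q * m).
  rewrite /lin3 -addrA shiftZ; last by apply: zetaD; apply: zetaMz.
  rewrite starMzl; last by apply: LZD.
  rewrite /s starDl // Cav // Cdv // mulrzDl !mulrzA mulr0z add0r //.
have subI : subbrace B Ip.
  apply: subbrace_of.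
  - by exists 0, 0, 0; rewrite lin3_0.
  - by move=> u v [m [j [l ->]]] [m' [j' [l' ->]]]; rewrite lin3D; do 3 eexists.
  - by move=> u [m [j [l ->]]]; rewrite lin3N; do 3 eexists.
  - by move=> u hu; apply/zeta2LZ/Jz2/IJ.
  - by move=> u v hu hv; apply: (proj2 (star_JI v u (IJ v hv) hu)).
have subJ : subbrace B Jp.
  apply: subbrace_of.
  - by exists 0, 0, 0; split; [apply: zeta0 | rewrite !mulr0z !addr0].
  - move=> u v [p [q [z [hz ->]]]] [p' [q' [z' [hz' ->]]]].
    exists (p + p'), (q + q'), (z + z'); split; first by apply: zetaD.
    by rewrite addrACA [_ + (a *~ p' + _)]addrACA !mulrzDr.
  - move=> u [p [q [z [hz ->]]]]; exists (- p), (- q), (- z); split; first by apply: zetaN.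
    by rewrite !opprD !mulrNz.
  - by move=> u hu; apply/zeta2LZ/Jz2.
  - move=> u v hu hv; exists 0, 0, (bstar B u v); split; last by rewrite !mulr0z !add0r.
    by apply: (proj1 (Jz2 u hu v)).
have zJ : forall z, zeta B z -> Jp z.
  by move=> z hz; exists 0, 0, z; split => //; rewrite !mulr0z !add0r.
have idJ : ideal B Jp.
  split => // y v _ hv; split; apply: zJ.
    by apply: (proj2 (Jz2 v hv y)).
  by apply: (proj1 (Jz2 v hv y)).
have idIJ : ideal_in B Jp Ip.
  split; [exact: subI | exact: IJ | move=> y u hy hu; exact: star_JI].
have idI := TB Ip Jp idJ idIJ.
have sI : Ip s by exists 1, 0, 0; rewrite /lin3 !mulr0z !addr0 mulr1z.
move=> x; have [_ _ h] := idI.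
have [h1 h2] := h x s I sI.
by split.
Qed.

Definition inford {V : zmodType} (v : V) := forall m : int, v *~ m = 0 -> m = 0.

Lemma inford_nat {V : zmodType} (v : V) :
  (forall k : nat, (0 < k)%N -> v *+ k <> 0) -> inford v.
Proof.
move=> h; case=> k.
  rewrite -pmulrn; case: k => // k E; exfalso; exact: (h k.+1 isT E).
rewrite NegzE mulrNz -pmulrn => /eqP; rewrite oppr_eq0 => /eqP E.
exfalso; exact: (h k.+1 isT E).
Qed.

Lemma nozeta_nat {V : zmodType} (B : brace_on V) (v : V) :
  (forall k : nat, (0 < k)%N -> ~ zeta B (v *+ k)) ->
  forall m : int, zeta B (v *~ m) -> m = 0.
Proof.
move=> h; case=> k.
  rewrite -pmulrn; case: k => // k E; exfalso; exact: (h k.+1 isT E).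
rewrite NegzE mulrNz -pmulrn => /zetaN; rewrite opprK => E.
exfalso; exact: (h k.+1 isT E).
Qed.

Lemma mulrzn {V : zmodType} (v : V) (m : int) (n : nat) : (v *~ m) *+ n = v *~ (m * n%:Z).
Proof. by rewrite mulrzA pmulrn. Qed.

Lemma int_mul_eq0 (m : int) (n : nat) : (0 < n)%N -> m * n%:Z = 0 -> m = 0.
Proof. move=> hn /eqP; rewrite mulf_eq0 => /orP [/eqP //|]. by case: n hn. Qed.

Lemma starMnl {V : zmodType} (B : brace_on V) u (k : nat) x :
  LZ B u -> bstar B (u *+ k) x = bstar B u x *+ k.
Proof. by move=> hu; rewrite !pmulrn starMzl. Qed.

Lemma core_NZ {V : zmodType} (B : brace_on V) a d (n : nat) y e m j l m' j' l' :
  (0 < n)%N -> a *+ n = 0 -> bstar B a a *+ n = 0 ->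
  zeta B (bstar B a a) -> zeta B (bstar B d d) ->
  (forall m : int, zeta B (d *~ m) -> m = 0) ->
  (forall L : int, (bstar B d d *~ L) *+ n = 0 -> bstar B d d *~ L = 0) ->
  zeta B y -> y *+ n = 0 -> zeta B e ->
  e = lin3 d (bstar B d d) (bstar B 0 0) m' j' l' ->
  y + e = lin3 (a + d) (bstar B a a) (bstar B d d) m j l ->
  exists k, y = bstar B a a *~ k.
Proof.
rewrite bstar0l /lin3 mul0rz addr0.
set t := bstar B a a; set w := bstar B d d.
move=> hn han htn zt zw hNZ hW zy hyn ze he hye.
have m'0 : m' = 0.
  apply: hNZ; have -> : d *~ m' = e - w *~ j' by rewrite he addrK.
  by apply: zetaD => //; apply/zetaN/zetaMz.
rewrite m'0 mulr0z add0r in he.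
have m0 : m = 0.
  have zs : zeta B ((a + d) *~ m).
    have -> : (a + d) *~ m = (y + e) - w *~ l - t *~ j by rewrite hye addrK addrK.
    by apply: zetaD; [apply: zetaD => //; [apply: zetaD | apply/zetaN/zetaMz] | apply/zetaN/zetaMz].
  have ha0 : (a *~ m) *+ n = 0 by rewrite pmulrn mulrzAC -pmulrn han mul0rz.
  have := zetaMz (n%:Z) zs; rewrite -pmulrn mulrzDl mulrnDl ha0 add0r mulrzn.
  by move/hNZ/int_mul_eq0; apply.
rewrite m0 mulr0z add0r in hye.
exists j.
have hy : y = t *~ j + w *~ (l - j') by rewrite mulrzBr addrA -hye he addrK.
have : (w *~ (l - j')) *+ n = 0.
  have htj : (t *~ j) *+ n = 0 by rewrite pmulrn mulrzAC -pmulrn htn mul0rz.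
  by have := hyn; rewrite hy mulrnDl htj add0r.
by move/hW; rewrite hy => ->; rewrite addr0.
Qed.

Lemma core_Z {V : zmodType} (B : brace_on V) a d (n : nat) y m j l :
  (0 < n)%N -> a *+ n = 0 -> bstar B a a *+ n = 0 -> inford d -> bstar B d d = 0 ->
  y *+ n = 0 -> y = lin3 (a + d) (bstar B a a) (bstar B d d) m j l ->
  exists k, y = bstar B a a *~ k.
Proof.
move=> hn han htn hd wd hyn hy; rewrite /lin3 wd mul0rz addr0 in hy.
have ha0 : (a *~ m) *+ n = 0 by rewrite pmulrn mulrzAC -pmulrn han mul0rz.
have ht0 : (bstar B a a *~ j) *+ n = 0 by rewrite pmulrn mulrzAC -pmulrn htn mul0rz.
have : d *~ (m * n%:Z) = 0.
  by rewrite -mulrzn -hyn hy mulrnDl ht0 addr0 mulrzDl mulrnDl ha0 add0r.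
move/hd/int_mul_eq0 => /(_ hn) m0.
by exists j; rewrite hy m0 mulr0z add0r.
Qed.

Lemma fin_NZ {V : zmodType} (B : brace_on V) a d (n : nat) :
  T_brace B -> (0 < n)%N -> a *+ n = 0 -> zeta2 B a -> zeta2 B d ->
  bstar B a d = 0 -> bstar B d a = 0 ->
  (forall m : int, zeta B (d *~ m) -> m = 0) ->
  (forall L : int, (bstar B d d *~ L) *+ n = 0 -> bstar B d d *~ L = 0) ->
  forall x,
    (exists k : int, bstar B x a = (bstar B a a) *~ k) /\
    (exists k : int, bstar B a x = (bstar B a a) *~ k).
Proof.
move=> TB hn han ha hd ad da hNZ hW x.
have LZa := zeta2LZ ha; have LZd := zeta2LZ hd.
have htn : bstar B a a *+ n = 0 by rewrite -bstarMnr han bstar0r.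
have [[m [j [l h1]]] [m2 [j2 [l2 h2]]]] := gen_ideal TB ha hd ad da x.
have [[m' [j' [l' e1]]] [m2' [j2' [l2' e2]]]] :=
  gen_ideal TB hd (zeta2_0 B) (bstar0r B d) (bstar0l B d) x.
rewrite addr0 in e1 e2.
rewrite bstarDr in h1; rewrite starDl // in h2.
split.
  apply: (core_NZ hn han htn (proj1 (ha a)) (proj1 (hd d)) hNZ hW _ _ _ e1 h1).
  - exact: (proj2 (ha x)).
  - by rewrite -bstarMnr han bstar0r.
  - exact: (proj2 (hd x)).
apply: (core_NZ hn han htn (proj1 (ha a)) (proj1 (hd d)) hNZ hW _ _ _ e2 h2).
- exact: (proj1 (ha x)).
- by rewrite -starMnl // han bstar0l.
- exact: (proj1 (hd x)).
Qed.

Theorem lemma4p4 (V : zmodType) (B : brace_on V) :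
  T_brace B ->
  forall a : V, zeta2 B a ->
  (exists n : nat, (0 < n)%N /\ a *+ n = 0) ->
  (exists b : V, zeta2 B b /\ forall n : nat, (0 < n)%N -> b *+ n <> 0) ->
  forall x : V,
    (exists k : int, bstar B x a = (bstar B a a) *~ k) /\
    (exists k : int, bstar B a x = (bstar B a a) *~ k).
Proof.
move=> TB a ha [n [hn han]] [b [hb hbinf]] x.
have LZa := zeta2LZ ha.
have htn : bstar B a a *+ n = 0 by rewrite -bstarMnr han bstar0r.
pose d0 := b *+ n.
have hd0 : zeta2 B d0 by rewrite /d0 pmulrn; apply: zeta2Mz.
have LZd0 := zeta2LZ hd0.
have ad0 : bstar B a d0 = 0 by rewrite bstarMnr -starMnl // han bstar0l.
have d0a : bstar B d0 a = 0.
  by rewrite /d0 starMnl; [rewrite -bstarMnr han bstar0r | exact: zeta2LZ].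
have inf0 : inford d0.
  apply: inford_nat => k hk; rewrite /d0 -mulrnA; apply: hbinf; by rewrite muln_gt0 hn.
case: (classic (exists k : nat, (0 < k)%N /\ zeta B (d0 *+ k))) => [[k [hk zk]]|H].
  pose d := d0 *+ k.
  have hd : zeta2 B d by apply: zeta_zeta2.
  have ad : bstar B a d = 0 by rewrite /d bstarMnr ad0 mul0rn.
  have da : bstar B d a = 0 := proj1 (zk a).
  have infd : inford d.
    move=> m; rewrite /d pmulrn -mulrzA => /inf0.
    by rewrite mulrC; apply: int_mul_eq0.
  have wd : bstar B d d = 0 := proj1 (zk d).
  have [[m [j [l h1]]] [m2 [j2 [l2 h2]]]] := gen_ideal TB ha hd ad da x.
  rewrite bstarDr (proj2 (zk x)) addr0 in h1.
  rewrite starDl in h2; [| exact: LZa | exact: zetaLZ].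
  rewrite (proj1 (zk x)) addr0 in h2.
  split.
    by apply: (core_Z hn han htn infd wd _ h1); rewrite -bstarMnr han bstar0r.
  by apply: (core_Z hn han htn infd wd _ h2); rewrite -starMnl // han bstar0l.
have hNZ0 : forall m : int, zeta B (d0 *~ m) -> m = 0.
  apply: nozeta_nat => k0 hk0 hz; apply: H; by exists k0.
case: (classic (exists e : nat, (0 < e)%N /\ bstar B d0 d0 *+ e = 0)) => [[e [he we]]|H2].
  pose d := d0 *+ e.
  have hd : zeta2 B d by rewrite /d pmulrn; apply: zeta2Mz.
  have ad : bstar B a d = 0 by rewrite /d bstarMnr ad0 mul0rn.
  have da : bstar B d a = 0 by rewrite /d starMnl // d0a mul0rn.
  have wd : bstar B d d = 0 by rewrite /d starMnl // bstarMnr we mul0rn.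
  apply: (fin_NZ TB hn han ha hd ad da); last by move=> L; rewrite wd mul0rz.
  move=> m; rewrite /d pmulrn -mulrzA => /hNZ0.
  by rewrite mulrC; apply: int_mul_eq0.
apply: (fin_NZ TB hn han ha hd0 ad0 d0a hNZ0).
have infw : inford (bstar B d0 d0).
  by apply: inford_nat => k hk hw; apply: H2; exists k.
by move=> L; rewrite mulrzn => /infw /int_mul_eq0 -> //; rewrite mulr0z.
Qed.
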